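(* Let $(x,y,p)$ be an optimal solution of the RMP with optimal value $z^{\mathit{RMP}}$ and let $(\alpha,\beta,\gamma,\delta,\mu,\phi,\psi)$ be an optimal solution of the DRMP, with characteristic lifting $(\alpha,\check\beta,\gamma,\check\delta,\mu,\phi,\psi)$. Define $$\bar c^*_b:=-\Bigl(\min_{l\in L(b),\,m\in\mathcal M}\bar c_{b,l,m}\Bigr)^-\le 0\quad(b\in\mathcal B),$$ $$\bar d^*:=-\Bigl(\min_{l\in\mathcal L\setminus\bigcap_{b\in\mathcal B}L(b)}\Bigl(-\sum_{b\in\mathcal B}\check\beta_{b,l}+\check\delta_l+\gamma-\chi_l\mu\Bigr)\Bigr)^-\le 0$$ (with $\bar d^*:=0$ if the index set is empty, and with the convention that a minimum over an empty set is $+\infty$), and the lower-bound shift $\tilde\alpha_b:=\alpha_b+\bar c^*_b$, $\tilde\beta:=\check\beta$, $\tilde\gamma:=\gamma-\bar d^*$, $\tilde\delta:=\check\delta$, $\tilde\mu:=\mu$, $\tilde\phi:=\phi$, $\tilde\psi:=\psi$. Then $(\tilde\alpha,\tilde\beta,\tilde\gamma,\tilde\delta,\tilde\mu,\tilde\phi,\tilde\psi)$ is feasible for the DMP, and its DMP objective value equals $z^{\mathit{RMP}}+\sum_{b\in\mathcal B}\bar c^*_b+k\bar d^*$. Consequently the optimal value $z^{\mathit{MP}}$ of the MP satisfies $$z^{\mathit{MP}}\ \ge\ z^{\mathit{RMP}}+\sum_{b\in\mathcal B}\bar c^*_b+k\,\bar d^*.$$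
   Context: Let $\mathcal B$ (branches) and $\mathcal S$ (sizes) be finite nonempty sets, $\mathcal M\subset\mathbb N$ a finite nonempty set of multiplicities, and $\mathcal L\subset\mathbb N^{\mathcal S}$ a finite nonempty set of lot-types; for $l\in\mathcal L$ write $|l|:=\sum_{s\in\mathcal S}l_s$. Let costs $c_{b,l,m}\ge 0$ ($b\in\mathcal B,l\in\mathcal L,m\in\mathcal M$), an integer $k\ge 0$, reals $\underline I\le\overline I$ and a constant $P>0$ be given. Let $\mathcal L''\subseteq\mathcal L'\subseteq\mathcal L$, for each $b\in\mathcal B$ let $L(b)\subseteq\mathcal L'$, and for each $b$ and $l\in L(b)$ let $M(b,l)\subseteq\mathcal M$ be nonempty. Put $\chi_l:=1$ if $l\notin\mathcal L''$ and $\chi_l:=0$ if $l\in\mathcal L''$. For real $t$, $(t)^+:=\max\{t,0\}$ and $(t)^-:=\max\{-t,0\}$. Master problem (MP): the linear program in variables $x_{b,l,m}\ge0$ ($b\in\mathcal B,l\in\mathcal L,m\in\mathcal M$), $y_l\ge0$ ($l\in\mathcal L$), $p\ge 0$: minimize $\sum_{b,l,m}c_{b,l,m}x_{b,l,m}+Pp$ subject to ($\alpha_b$) $\sum_{l,m}x_{b,l,m}=1$ for all $b$; ($\beta_{b,l}$) $y_l-\sum_m x_{b,l,m}\ge 0$ for all $b,l$; ($\gamma$) $-\sum_l y_l\ge -k$; ($\delta_l$) $\sum_{b,m}x_{b,l,m}-y_l\ge0$ for all $l$; ($\mu$) $\sum_{l\in\mathcal L\setminus\mathcal L''}y_l+p\ge1$;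 ($\phi$) $\sum_{b,l,m}m|l|x_{b,l,m}\ge\underline I$; ($\psi$) $-\sum_{b,l,m}m|l|x_{b,l,m}\ge-\overline I$. The symbol in parentheses names the dual variable of each constraint. Restricted master problem (RMP): the same LP but containing only the variables $x_{b,l,m}$ with $l\in L(b)$, $m\in M(b,l)$, the variables $y_l$ with $l\in\mathcal L'$, and $p$; only the $\beta_{b,l}$-constraints with $l\in L(b)$ and the $\delta_l$-constraints with $l\in\mathcal L'$ are kept, and all sums are restricted to the present variables. Dual master problem (DMP): variables $\alpha_b\in\mathbb R$, $\beta_{b,l}\ge0$ (all $b\in\mathcal B,l\in\mathcal L$), $\gamma\ge0$, $\delta_l\ge0$ (all $l\in\mathcal L$), $\mu\ge0$, $\phi,\psi\ge0$; maximize $\sum_b\alpha_b-k\gamma+\underline I\phi-\overline I\psi+\mu$ subject to the $x$-constraints $\alpha_b-\beta_{b,l}+\delta_l+m|l|(\phi-\psi)\le c_{b,l,m}$ for all $b,l,m$, the $y$-constraints $\sum_{b\in\mathcal B}\beta_{b,l}-\gamma-\delta_l+\chi_l\mu\le 0$ for all $l\in\mathcal L$, and the $p$-constraint $\mu\le P$. The dual restricted master problem (DRMP) is the LP dual of the RMP: variables $\alpha_b$, $\beta_{b,l}$ ($l\in L(b)$), $\gamma$, $\delta_l$ ($l\in\mathcal L'$), $\mu,\phi,\psi$ with the same sign conditions and objective, $x$-constraints only for $l\in L(b)$, $m\in M(b,l)$, $y$-constraints $\sum_{b:\,l\in L(b)}\beta_{b,l}-\gamma-\delta_l+\chi_l\mu\le0$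 for $l\in\mathcal L'$, and $\mu\le P$. Given a DRMP solution $(\alpha,\beta,\gamma,\delta,\mu,\phi,\psi)$: its canonical lifting sets $\bar\beta_{b,l}:=\beta_{b,l}$ if $l\in L(b)$ and $0$ otherwise, $\bar\delta_l:=\delta_l$ if $l\in\mathcal L'$ and $0$ otherwise. The (uncompensated) reduced cost is $\bar c_{b,l,m}:=c_{b,l,m}-\alpha_b+\bar\beta_{b,l}-\bar\delta_l-m|l|(\phi-\psi)$ for all $b\in\mathcal B,l\in\mathcal L,m\in\mathcal M$. The characteristic lifting is $(\alpha,\check\beta,\gamma,\check\delta,\mu,\phi,\psi)$ with $\check\beta_{b,l}:=\beta_{b,l}$ if $l\in L(b)$ and $\check\beta_{b,l}:=(\min_{m\in\mathcal M}\bar c_{b,l,m})^-$ if $l\in\mathcal L\setminus L(b)$; $\check\delta_l:=\delta_l$ if $l\in\mathcal L'$ and $\check\delta_l:=(\min_{b\in\mathcal B,m\in\mathcal M}\bar c_{b,l,m})^+$ if $l\in\mathcal L\setminus\mathcal L'$. *)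

(* Defs.v *)
From HB Require Import structures.
From mathcomp Require Import all_boot all_order all_algebra.
Set Implicit Arguments. Unset Strict Implicit. Unset Printing Implicit Defensive.
Import Order.TTheory GRing.Theory Num.Theory.
Local Open Scope ring_scope.

Section Defs.
Variable R : realFieldType.
(* B = branches, S = sizes, Mt = index type of multiplicities, Lt = index type
   of lot-types. *)
Variables B S Mt Lt : finType.

(* Problem data. mval m is the multiplicity (a natural number) named by m,
   lot l is the lot-type (a vector in N^S) named by l. *)
Record data := Data {
  mval : Mt -> nat;
  lot : Lt -> {ffun S -> nat};
  cost : B -> Lt -> Mt -> R;
  kk : nat;
  Ilo : R;
  Ihi : R;
  Pen : R;
  Lpp : {set Lt};
  Lp : {set Lt};
  Lb : B -> {set Lt};
  Mb : B -> Lt -> {set Mt}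
}.

Variable D : data.

Definition lsize (l : Lt) : nat := (\sum_(s : S) lot D l s)%N.
Definition coef (l : Lt) (m : Mt) : R := (mval D m * lsize l)%:R.
Definition chi (l : Lt) : R := if l \in Lpp D then 0 else 1.

Definition MP_I (x : B -> Lt -> Mt -> R) : R :=
  \sum_(b : B) \sum_(l : Lt) \sum_(m : Mt) coef l m * x b l m.

Definition MP_feasible (x : B -> Lt -> Mt -> R) (y : Lt -> R) (p : R) : Prop :=
  (forall b l m, 0 <= x b l m) /\ (forall l, 0 <= y l) /\ 0 <= p /\
  (forall b, \sum_(l : Lt) \sum_(m : Mt) x b l m = 1) /\
  (forall b l, 0 <= y l - \sum_(m : Mt) x b l m) /\
  - (kk D)%:R <= - \sum_(l : Lt) y l /\
  (forall l, 0 <= \sum_(b : B) \sum_(m : Mt) x b l m - y l) /\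
  1 <= \sum_(l | l \notin Lpp D) y l + p /\
  Ilo D <= MP_I x /\
  - Ihi D <= - MP_I x.

Definition MP_obj (x : B -> Lt -> Mt -> R) (p : R) : R :=
  \sum_(b : B) \sum_(l : Lt) \sum_(m : Mt) cost D b l m * x b l m + Pen D * p.

(* ---------------- Restricted master problem ----------------
   Variables are given as total functions, but only the entries x b l m with
   l \in L(b), m \in M(b,l), and y l with l \in L' occur in the RMP. *)
Definition RMP_I (x : B -> Lt -> Mt -> R) : R :=
  \sum_(b : B) \sum_(l in Lb D b) \sum_(m in Mb D b l) coef l m * x b l m.

Definition RMP_feasible (x : B -> Lt -> Mt -> R) (y : Lt -> R) (p : R) : Prop :=
  (forall b l m, l \in Lb D b -> m \in Mb D b l -> 0 <= x b l m) /\
  (forall l, l \in Lp D -> 0 <= y l) /\ 0 <= p /\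
  (forall b, \sum_(l in Lb D b) \sum_(m in Mb D b l) x b l m = 1) /\
  (forall b l, l \in Lb D b -> 0 <= y l - \sum_(m in Mb D b l) x b l m) /\
  - (kk D)%:R <= - \sum_(l in Lp D) y l /\
  (forall l, l \in Lp D ->
     0 <= \sum_(b : B | l \in Lb D b) \sum_(m in Mb D b l) x b l m - y l) /\
  1 <= \sum_(l in Lp D :\: Lpp D) y l + p /\
  Ilo D <= RMP_I x /\
  - Ihi D <= - RMP_I x.

Definition RMP_obj (x : B -> Lt -> Mt -> R) (p : R) : R :=
  \sum_(b : B) \sum_(l in Lb D b) \sum_(m in Mb D b l) cost D b l m * x b l m
  + Pen D * p.

Definition RMP_optimal (x : B -> Lt -> Mt -> R) (y : Lt -> R) (p : R) : Prop :=
  RMP_feasible x y p /\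
  forall x' y' p', RMP_feasible x' y' p' -> RMP_obj x p <= RMP_obj x' p'.

Definition dual_obj (al : B -> R) (ga mu ph ps : R) : R :=
  \sum_(b : B) al b - (kk D)%:R * ga + Ilo D * ph - Ihi D * ps + mu.

Definition DMP_feasible (al : B -> R) (be : B -> Lt -> R) (ga : R)
    (de : Lt -> R) (mu ph ps : R) : Prop :=
  (forall b l, 0 <= be b l) /\ 0 <= ga /\ (forall l, 0 <= de l) /\
  0 <= mu /\ 0 <= ph /\ 0 <= ps /\
  (forall b l m, al b - be b l + de l + coef l m * (ph - ps) <= cost D b l m) /\
  (forall l, \sum_(b : B) be b l - ga - de l + chi l * mu <= 0) /\
  mu <= Pen D.

(* Dual of the RMP: only be b l with l \in L(b) and de l with l \in L' occur. *)
Definition DRMP_feasible (al : B -> R) (be : B -> Lt -> R) (ga : R)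
    (de : Lt -> R) (mu ph ps : R) : Prop :=
  (forall b l, l \in Lb D b -> 0 <= be b l) /\ 0 <= ga /\
  (forall l, l \in Lp D -> 0 <= de l) /\
  0 <= mu /\ 0 <= ph /\ 0 <= ps /\
  (forall b l m, l \in Lb D b -> m \in Mb D b l ->
     al b - be b l + de l + coef l m * (ph - ps) <= cost D b l m) /\
  (forall l, l \in Lp D ->
     \sum_(b : B | l \in Lb D b) be b l - ga - de l + chi l * mu <= 0) /\
  mu <= Pen D.

Definition DRMP_optimal (al : B -> R) (be : B -> Lt -> R) (ga : R)
    (de : Lt -> R) (mu ph ps : R) : Prop :=
  DRMP_feasible al be ga de mu ph ps /\
  forall al' be' ga' de' mu' ph' ps',
    DRMP_feasible al' be' ga' de' mu' ph' ps' ->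
    dual_obj al' ga' mu' ph' ps' <= dual_obj al ga mu ph ps.

(* ---------------- minima with the +infinity convention ----------------
   fmin s = None encodes +infinity (minimum over an empty set). *)
Definition fmin (s : seq R) : option R :=
  foldr (fun v o => Some (if o is Some w then Num.min v w else v)) None s.
Definition negpartE (o : option R) : R :=
  if o is Some v then Num.max (- v) 0 else 0.
(* (t)^+ ; only applied to minima over nonempty index sets *)
Definition pospartE (o : option R) : R :=
  if o is Some v then Num.max v 0 else 0.

Section Lifting.
Variables (al : B -> R) (be : B -> Lt -> R) (ga : R) (de : Lt -> R)
          (mu ph ps : R).

Definition betabar b l : R := if l \in Lb D b then be b l else 0.
Definition deltabar l : R := if l \in Lp D then de l else 0.
Definition cbar b l m : R :=
  cost D b l m - al b + betabar b l - deltabar l - coef l m * (ph - ps).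
Definition checkbeta b l : R :=
  if l \in Lb D b then be b l
  else negpartE (fmin [seq cbar b l m | m <- index_enum Mt]).
Definition checkdelta l : R :=
  if l \in Lp D then de l
  else pospartE (fmin [seq cbar b l m | b <- index_enum B, m <- index_enum Mt]).
Definition cstar b : R :=
  - negpartE (fmin [seq cbar b l m | l <- enum (Lb D b), m <- index_enum Mt]).
Definition dval l : R :=
  - \sum_(b : B) checkbeta b l + checkdelta l + ga - chi l * mu.
Definition dstar : R :=
  - negpartE (fmin [seq dval l | l <- enum (~: \bigcap_(b : B) Lb D b)]).
Definition alpha_t b : R := al b + cstar b.
Definition gamma_t : R := ga - dstar.
End Lifting.

End Defs.

(* Main.v *)
Require Import Defs.
From HB Require Import structures.
From mathcomp Require Import all_boot all_order all_algebra.
From mathcomp Require Import ring lra.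
Set Implicit Arguments. Unset Strict Implicit. Unset Printing Implicit Defensive.
Import Order.TTheory GRing.Theory Num.Theory.
Local Open Scope ring_scope.

Section Farkas.
Variable R : realFieldType.

Lemma sum_unit (F : unit -> R) : \sum_(u : unit) F u = F tt.
Proof. by rewrite (big_pred1 tt) // => -[]. Qed.

Lemma sum_if1 (T : finType) (t0 : T) (F : T -> R) :
  \sum_t (if t == t0 then F t else 0) = F t0.
Proof. by rewrite -big_mkcond big_pred1_eq. Qed.

Variable V : finType.

Definition feas (C : finType) (A : C -> V -> R) (b : C -> R) (v : V -> R) :=
  forall c, b c <= \sum_i A c i * v i.

Definition cone (C : finType) (A : C -> V -> R) (b : C -> R) (al : V -> R) (be : R) :=
  exists lam : C -> R, (forall c, 0 <= lam c) /\
    (forall i, al i = \sum_c lam c * A c i) /\ be = \sum_c lam c * b c.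

Section Cone.
Variables (C : finType) (A : C -> V -> R) (b : C -> R).

Lemma cone_gen c : cone A b (A c) (b c).
Proof.
exists (fun c' => if c' == c then 1 else 0); split; first by move=> c'; case: ifP.
split; first move=> i.
  rewrite (eq_bigr (fun c' => if c' == c then A c' i else 0)) ?sum_if1 //.
  by move=> c' _; case: ifP; rewrite ?mul1r ?mul0r.
rewrite (eq_bigr (fun c' => if c' == c then b c' else 0)) ?sum_if1 //.
by move=> c' _; case: ifP; rewrite ?mul1r ?mul0r.
Qed.

Lemma cone0 : cone A b (fun _ => 0) 0.
Proof.
exists (fun _ => 0); split => //; split; last by rewrite big1 // => c _; rewrite mul0r.
by move=> i; rewrite big1 // => c _; rewrite mul0r.
Qed.

Lemma cone_ext al al' be be' : (forall i, al i = al' i) -> be = be' ->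
  cone A b al be -> cone A b al' be'.
Proof.
move=> H <- [lam [h1 [h2 h3]]]; exists lam; split => //; split => // i.
by rewrite -H.
Qed.

Lemma cone_add al1 be1 al2 be2 : cone A b al1 be1 -> cone A b al2 be2 ->
  cone A b (fun i => al1 i + al2 i) (be1 + be2).
Proof.
move=> [l1 [p1 [e1 f1]]] [l2 [p2 [e2 f2]]].
exists (fun c => l1 c + l2 c); split; first by move=> c; rewrite addr_ge0.
split; last by rewrite f1 f2 -big_split; apply: eq_bigr => c _; rewrite mulrDl.
by move=> i; rewrite e1 e2 -big_split; apply: eq_bigr => c _; rewrite mulrDl.
Qed.

Lemma cone_scale k al be : 0 <= k -> cone A b al be ->
  cone A b (fun i => k * al i) (k * be).
Proof.
move=> hk [l [p [e f]]]; exists (fun c => k * l c); split.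
  by move=> c; rewrite mulr_ge0.
split; last by rewrite f mulr_sumr; apply: eq_bigr => c _; rewrite mulrA.
by move=> i; rewrite e mulr_sumr; apply: eq_bigr => c _; rewrite mulrA.
Qed.

Lemma cone_sum (I : finType) (k : I -> R) (ga : I -> V -> R) (gb : I -> R) :
  (forall i, 0 <= k i) -> (forall i, cone A b (ga i) (gb i)) ->
  cone A b (fun v => \sum_i k i * ga i v) (\sum_i k i * gb i).
Proof.
move=> hk hg.
elim: (index_enum I) => [|i s IH].
  by apply: cone_ext cone0 => [v|]; rewrite big_nil.
apply: cone_ext (cone_add (cone_scale (hk i) (hg i)) IH) => [v|];
  by rewrite big_cons.
Qed.

End Cone.

Lemma sep_seq (T : eqType) (s1 s2 : seq T) (L U : T -> R) :
  (forall p n, p \in s1 -> n \in s2 -> L p <= U n) ->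
  exists t, (forall p, p \in s1 -> L p <= t) /\ (forall n, n \in s2 -> t <= U n).
Proof.
elim: s1 => [|p s1 IH] H.
  elim: s2 {H} => [|n s2 IH]; first by exists 0.
  have [t [_ Ht]] := IH.
  case: (lerP t (U n)) => htn.
    exists t; split => // n'; rewrite in_cons => /orP [/eqP -> //|]; exact: Ht.
  exists (U n); split => // n'; rewrite in_cons => /orP [/eqP -> //|/Ht].
  move=> h; apply: le_trans h; exact: ltW.
have [t [Ht1 Ht2]] : exists t, (forall p, p \in s1 -> L p <= t) /\
   (forall n, n \in s2 -> t <= U n).
  by apply: IH => p' n hp hn; apply: H => //; rewrite in_cons hp orbT.
case: (lerP (L p) t) => hpt.
  exists t; split => // p'; rewrite in_cons => /orP [/eqP -> //|]; exact: Ht1.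
exists (L p); split.
  move=> p'; rewrite in_cons => /orP [/eqP -> //|/Ht1] h.
  apply: le_trans h _; exact: ltW.
by move=> n hn; apply: H => //; rewrite in_cons eqxx.
Qed.

Lemma split_j (C : finType) (A : C -> V -> R) (c : C) (j : V) (u : V -> R) t :
  \sum_i A c i * (if i == j then t else u i) =
  \sum_i A c i * (if i == j then 0 else u i) + A c j * t.
Proof.
rewrite (bigD1 j) //= [in RHS](bigD1 j) //= !eqxx mulr0 add0r addrC; congr (_ + _).
by apply: eq_bigr => i /negbTE ->.
Qed.

Lemma farkas_gen n : forall (X : {set V}) (C : finType) (A : C -> V -> R) (b : C -> R),
  #|X| = n -> (forall c i, i \notin X -> A c i = 0) ->
  ~ (exists v, feas A b v) -> exists be, 0 < be /\ cone A b (fun _ => 0) be.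
Proof.
elim: n => [|n IH] X C A b hX hsup hinf.
  have X0 := cards0_eq hX.
  have A0 : forall c i, A c i = 0 by move=> c i; apply: hsup; rewrite X0 inE.
  case: (boolP [exists c, 0 < b c]) => [/existsP [c hc]|].
    exists (b c); split => //; apply: cone_ext (cone_gen A b c) => // i.
  rewrite negb_exists => /forallP hn; exfalso; apply: hinf.
  exists (fun _ => 0) => c; rewrite big1 => [|i _]; [by rewrite leNgt hn | by rewrite mulr0].
have : (0 < #|X|)%N by rewrite hX.
move=> /card_gt0P [j hj].
have hXj : #|X :\ j| = n by move: hX; rewrite (cardsD1 j) hj add1n => -[].
pose s c := A c j.
pose C' := (C + (C * C))%type.
pose A' (c' : C') : V -> R := match c' with
  | inl c => if s c == 0 then A c else fun _ => 0
  | inr (p, q) => if (0 < s p) && (s q < 0) then (fun i => - s q * A p i + s p * A q i)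
                  else fun _ => 0 end.
pose b' (c' : C') : R := match c' with
  | inl c => if s c == 0 then b c else 0
  | inr (p, q) => if (0 < s p) && (s q < 0) then - s q * b p + s p * b q else 0 end.
have hsup' : forall c' i, i \notin X :\ j -> A' c' i = 0.
  move=> c' i; rewrite in_setD1 negb_and negbK => /orP [/eqP ->|/(hsup _ _) h].
    case: c' => [c|[p q]] /=; case: ifP => // /eqP //.
    by rewrite /s => _; ring.
  case: c' => [c|[p q]] /=; case: ifP => //; rewrite ?h ?(hsup p i _) ?(hsup q i _) //.
  by rewrite !mulr0 addr0.
have hinf' : ~ (exists v, feas A' b' v).
  move=> [v hv]; apply: hinf.
  pose r c := \sum_i A c i * (if i == j then 0 else v i).
  have hr : forall c t, \sum_i A c i * (if i == j then t else v i) = r c + s c * t.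
    by move=> c t; rewrite split_j.
  have hv' : forall c, \sum_i A c i * v i = r c + s c * v j.
    move=> c; rewrite -hr; apply: eq_bigr => i _; by case: eqP => // ->.
  pose L c := (b c - r c) / s c.
  have hLU : forall p q, p \in [seq p <- index_enum C | 0 < s p] ->
      q \in [seq q <- index_enum C | s q < 0] -> L p <= L q.
    move=> p q; rewrite !mem_filter !mem_index_enum !andbT => hp hq.
    have := hv (inr (p, q)); rewrite /b' /A' hp hq /=.
    rewrite (eq_bigr (fun i => - s q * (A p i * v i) + s p * (A q i * v i)));
      last by move=> i _; ring.
    rewrite big_split /= -!mulr_sumr !hv' => h.
    rewrite /L ler_pdivrMr //.
    set u := (b q - r q) / s q.
    have hu : u * s q = b q - r q by rewrite /u divfK // ltr0_neq0.
    nra.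
  have [t [Ht1 Ht2]] := sep_seq hLU.
  exists (fun i => if i == j then t else v i) => c; rewrite hr.
  case: (ltrgtP (s c) 0) => hsc.
  - have := Ht2 c; rewrite mem_filter mem_index_enum hsc andbT => /(_ isT).
    by rewrite /L ler_ndivlMr // => h; lra.
  - have := Ht1 c; rewrite mem_filter mem_index_enum hsc andbT => /(_ isT).
    by rewrite /L ler_pdivrMr // => h; lra.
  - have := hv (inl c); rewrite /b' /A' hsc eqxx hv' hsc !mul0r.
    by rewrite addr0.
have [be [hbe [lam [hl [h0 hb]]]]] := IH _ C' A' b' hXj hsup' hinf'.
exists be; split => //.
have hg : forall c', cone A b (A' c') (b' c').
  case=> [c|[p q]] /=.
    case: ifP => _; [exact: cone_gen | exact: cone0].
  case: ifP => [/andP [hp hq]|_]; last exact: cone0.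
  apply: cone_add; apply: cone_scale; rewrite ?oppr_ge0 ?ltW //; exact: cone_gen.
apply: cone_ext (cone_sum hl hg) => [i|]; by rewrite ?h0 ?hb.
Qed.

Lemma farkas (C : finType) (A : C -> V -> R) (b : C -> R) :
  ~ (exists v, feas A b v) -> exists be, 0 < be /\ cone A b (fun _ => 0) be.
Proof.
move=> h; apply: (@farkas_gen #|[set: V]| setT) => // c i; by rewrite inE.
Qed.

Lemma wd_gen (C : finType) (A : C -> V -> R) (b : C -> R) (mu : C -> R) v :
  (forall c, 0 <= mu c) -> feas A b v ->
  \sum_c mu c * b c <= \sum_i (\sum_c mu c * A c i) * v i.
Proof.
move=> hm hv.
apply: (@le_trans _ _ (\sum_c mu c * \sum_i A c i * v i)).
  by apply: ler_sum => c _; apply: ler_wpM2l.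
rewrite (eq_bigr (fun c => \sum_i mu c * (A c i * v i))); last by move=> c _; rewrite mulr_sumr.
rewrite exchange_big /=; apply: ler_sum => i _; rewrite mulr_suml.
by apply: ler_sum => c _; rewrite mulrA.
Qed.

Lemma lp_dual (C : finType) (A : C -> V -> R) (b : C -> R) (cst : V -> R) (z : R) :
  (exists v, feas A b v) ->
  (forall v, feas A b v -> z <= \sum_i cst i * v i) ->
  forall eps, 0 < eps -> exists lam : C -> R, (forall c, 0 <= lam c) /\
    (forall i, \sum_c lam c * A c i = cst i) /\ z - eps < \sum_c lam c * b c.
Proof.
move=> [v0 hv0] hz eps he.
pose C'' := (C + unit)%type.
pose A'' (c : C'') : V -> R := match c with inl c => A c | inr _ => fun i => - cst i end.
pose b'' (c : C'') : R := match c with inl c => b c | inr _ => eps - z end.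
have hinf : ~ (exists v, feas A'' b'' v).
  move=> [v hv].
  have h1 : feas A b v by move=> c; exact: (hv (inl c)).
  have := hv (inr tt); rewrite /= (eq_bigr (fun i => - (cst i * v i))) ?sumrN;
    last by move=> i _; rewrite mulNr.
  have := hz v h1; lra.
have [be [hbe [lam [hl [h0 hb]]]]] := farkas hinf.
pose l0 := lam (inr tt).
pose mu c := lam (inl c).
have hA : forall i, \sum_c mu c * A c i = l0 * cst i.
  move=> i; have := h0 i; rewrite big_sumType /= sum_unit /=.
  by move=> h; apply/eqP; rewrite -subr_eq0 -(eqP (eq_refl 0)); apply/eqP; rewrite /mu /l0; lra.
have hB : be = \sum_c mu c * b c + l0 * (eps - z).
  by rewrite hb big_sumType /= sum_unit.
have hl0 : 0 <= l0 by exact: hl.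
have hmu : forall c, 0 <= mu c by move=> c; exact: hl.
case: (ltrgtP l0 0) => hl0'; first by exfalso; lra.
  exists (fun c => mu c / l0); split; first by move=> c; rewrite divr_ge0 // ltW.
  split.
    move=> i; rewrite (eq_bigr (fun c => (mu c * A c i) * l0^-1));
      last by move=> c _; rewrite mulrAC.
    rewrite -mulr_suml hA; field; exact: lt0r_neq0.
  rewrite (eq_bigr (fun c => (mu c * b c) * l0^-1));
      last by move=> c _; rewrite mulrAC.
  rewrite -mulr_suml.
  have -> : \sum_c mu c * b c = be - l0 * (eps - z) by lra.
  rewrite ltr_pdivlMr //; nra.
exfalso.
have := wd_gen hmu hv0.
have h0s : \sum_i (\sum_c mu c * A c i) * v0 i = 0.
  by rewrite big1 // => i _; rewrite hA hl0' !mul0r.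
rewrite h0s.
rewrite hl0' mul0r addr0 in hB; lra.
Qed.

Lemma wd_lp (C : finType) (A : C -> V -> R) (b : C -> R) (cst : V -> R) lam v :
  (forall c, 0 <= lam c) -> (forall i, \sum_c lam c * A c i = cst i) -> feas A b v ->
  \sum_c lam c * b c <= \sum_i cst i * v i.
Proof.
move=> hl hc hv; have := wd_gen hl hv.
by rewrite (eq_bigr (fun i => cst i * v i)) // => i _; rewrite hc.
Qed.

End Farkas.

Section App.
Variable R : realFieldType.
Variables B S Mt Lt : finType.
Variable D : data R B S Mt Lt.
Hypothesis hLb : forall b, Lb D b \subset Lp D.

Local Notation T3 := (B * Lt * Mt)%type.
Local Notation V := ((T3 + Lt + unit)%type).
Local Notation C := (((((((((T3 + Lt) + unit) + (B * bool)) + (B * Lt)) + unit) + Lt) + unit) + bool)%type).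

Definition dom b l m := (l \in Lb D b) && (m \in Mb D b l).
Definition sg (s : bool) : R := if s then 1 else -1.

Definition mkA (ax : B -> Lt -> Mt -> R) (ay : Lt -> R) (ap : R) (i : V) : R :=
  match i with
  | inl (inl (b, l, m)) => ax b l m
  | inl (inr l) => ay l
  | inr _ => ap
  end.

Definition z3 : B -> Lt -> Mt -> R := fun _ _ _ => 0.
Definition z1 : Lt -> R := fun _ => 0.

Definition coefs (c : C) : (B -> Lt -> Mt -> R) * (Lt -> R) * R * R :=
  match c with
  | inl (inl (inl (inl (inl (inl (inl (inl t))))))) =>
      ((fun b l m => if (b, l, m) == t then (if dom b l m then 1 else 0) else 0), z1, 0, 0)
  | inl (inl (inl (inl (inl (inl (inl (inr l0))))))) =>
      (z3, (fun l => if l == l0 then (if l \in Lp D then 1 else 0) else 0), 0, 0)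
  | inl (inl (inl (inl (inl (inl (inr _)))))) => (z3, z1, 1, 0)
  | inl (inl (inl (inl (inl (inr (b0, s)))))) =>
      ((fun b l m => if b == b0 then (if dom b l m then sg s else 0) else 0), z1, 0, sg s)
  | inl (inl (inl (inl (inr (b0, l0))))) =>
      ((fun b l m => if b == b0 then (if l == l0 then (if dom b l m then -1 else 0) else 0) else 0),
       (fun l => if l == l0 then (if l \in Lb D b0 then 1 else 0) else 0), 0, 0)
  | inl (inl (inl (inr _))) => (z3, (fun l => if l \in Lp D then -1 else 0), 0, - (kk D)%:R)
  | inl (inl (inr l0)) =>
      ((fun b l m => if l == l0 then (if (l \in Lp D) && dom b l m then 1 else 0) else 0),
       (fun l => if l == l0 then (if l \in Lp D then -1 else 0) else 0), 0, 0)
  | inl (inr _) => (z3, (fun l => if l \in Lp D :\: Lpp D then 1 else 0), 1, 1)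
  | inr s => ((fun b l m => if dom b l m then sg s * coef D l m else 0), z1, 0,
              if s then Ilo D else - Ihi D)
  end.

Definition A (c : C) : V -> R := mkA (coefs c).1.1.1 (coefs c).1.1.2 (coefs c).1.2.
Definition bc (c : C) : R := (coefs c).2.
Definition cst : V -> R := mkA (fun b l m => if dom b l m then cost D b l m else 0) z1 (Pen D).

Definition vx (v : V -> R) b l m := v (inl (inl (b, l, m))).
Definition vy (v : V -> R) l := v (inl (inr l)).
Definition vp (v : V -> R) := v (inr tt).
Definition enc (x : B -> Lt -> Mt -> R) (y : Lt -> R) (p : R) : V -> R :=
  fun i => match i with inl (inl (b, l, m)) => x b l m | inl (inr l) => y l | inr _ => p end.

Lemma sum3 (F : T3 -> R) : \sum_t F t = \sum_b \sum_l \sum_m F (b, l, m).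
Proof.
symmetry.
rewrite (pair_big xpredT xpredT (fun b l => \sum_m F (b, l, m))) /=.
rewrite (pair_big xpredT xpredT (fun p m => F (p.1, p.2, m))) /=.
by apply: eq_bigr => -[[b l] m].
Qed.

Lemma rowsum ax ay ap v :
  \sum_i mkA ax ay ap i * v i =
  \sum_b \sum_l \sum_m ax b l m * vx v b l m + \sum_l ay l * vy v l + ap * vp v.
Proof.
by rewrite !big_sumType /= sum_unit sum3.
Qed.


Definition cNX t : C := inl (inl (inl (inl (inl (inl (inl (inl t))))))).
Definition cNY l : C := inl (inl (inl (inl (inl (inl (inl (inr l))))))).
Definition cNP : C := inl (inl (inl (inl (inl (inl (inr tt)))))).
Definition cAL q : C := inl (inl (inl (inl (inl (inr q))))).
Definition cBE q : C := inl (inl (inl (inl (inr q)))).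
Definition cGA : C := inl (inl (inl (inr tt))).
Definition cDE l : C := inl (inl (inr l)).
Definition cMU : C := inl (inr tt).
Definition cPH s : C := inr s.

Lemma mul_if (P : bool) (a y : R) : (if P then a else 0) * y = if P then a * y else 0.
Proof. by case: P; rewrite ?mul0r. Qed.

Lemma sum_if0 (T : finType) (P : bool) (F : T -> R) :
  \sum_t (if P then F t else 0) = if P then \sum_t F t else 0.
Proof. by case: P => //; rewrite big1. Qed.

Lemma sum_if1' (T : finType) (t0 : T) (F : T -> R) :
  \sum_t (if t0 == t then F t else 0) = F t0.
Proof.
rewrite -(sum_if1 t0 F); apply: eq_bigr => t _; by rewrite eq_sym.
Qed.

Lemma sum_dom b (G : Lt -> Mt -> R) :
  \sum_l \sum_m (if dom b l m then G l m else 0) =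
  \sum_(l in Lb D b) \sum_(m in Mb D b l) G l m.
Proof.
rewrite [RHS]big_mkcond; apply: eq_bigr => l _; rewrite /dom.
case: (l \in Lb D b) => /=; last by rewrite big1.
by rewrite [RHS]big_mkcond.
Qed.

Lemma sum_cond (T : finType) (P : pred T) (F : T -> R) :
  \sum_(t | P t) F t = \sum_t (if P t then F t else 0).
Proof. exact: big_mkcond. Qed.

Lemma z3s (w : B -> Lt -> Mt -> R) : \sum_b \sum_l \sum_m z3 b l m * w b l m = 0.
Proof. by rewrite big1 // => b _; rewrite big1 // => l _; rewrite big1 // => m _; rewrite mul0r. Qed.
Lemma z1s (w : Lt -> R) : \sum_l z1 l * w l = 0.
Proof. by rewrite big1 // => l _; rewrite mul0r. Qed.

Section Rows.
Variable v : V -> R.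
Local Notation x := (vx v).
Local Notation y := (vy v).
Local Notation p := (vp v).
Local Notation dot c := (\sum_i A c i * v i).

Lemma rowNX b0 l0 m0 : dot (cNX (b0, l0, m0)) = if dom b0 l0 m0 then x b0 l0 m0 else 0.
Proof.
rewrite /A /cNX rowsum /= z1s mul0r !addr0.
under eq_bigr do under eq_bigr do under eq_bigr do rewrite mul_if.
have := sum3 (fun t => if t == (b0, l0, m0) then
  (if dom t.1.1 t.1.2 t.2 then 1 else 0) * x t.1.1 t.1.2 t.2 else 0).
rewrite /= => <-; rewrite sum_if1 /=; case: ifP; by rewrite ?mul1r ?mul0r.
Qed.

Lemma rowNY l0 : dot (cNY l0) = if l0 \in Lp D then y l0 else 0.
Proof.
rewrite /A /cNY rowsum /= z3s mul0r add0r addr0.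
under eq_bigr do rewrite mul_if; rewrite sum_if1; case: ifP; by rewrite ?mul1r ?mul0r.
Qed.

Lemma rowNP : dot cNP = p.
Proof. by rewrite /A /cNP rowsum /= z3s z1s mul1r !add0r. Qed.

Lemma rowAL b0 s : dot (cAL (b0, s)) = sg s * \sum_(l in Lb D b0) \sum_(m in Mb D b0 l) x b0 l m.
Proof.
rewrite /A /cAL rowsum /= z1s mul0r !addr0.
under eq_bigr do under eq_bigr do under eq_bigr do rewrite mul_if.
under eq_bigr do under eq_bigr do rewrite sum_if0.
under eq_bigr do rewrite sum_if0.
rewrite sum_if1 -sum_dom mulr_sumr; apply: eq_bigr => l _; rewrite mulr_sumr.
by apply: eq_bigr => m _; rewrite mul_if; case: ifP; rewrite ?mulr0.
Qed.


Lemma rowBE b0 l0 : dot (cBE (b0, l0)) =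
  if l0 \in Lb D b0 then y l0 - \sum_(m in Mb D b0 l0) x b0 l0 m else 0.
Proof.
rewrite /A /cBE rowsum /= mul0r addr0.
under eq_bigr do under eq_bigr do under eq_bigr do rewrite mul_if.
under eq_bigr do under eq_bigr do rewrite sum_if0.
under eq_bigr do rewrite sum_if0.
rewrite sum_if1.
rewrite (eq_bigr (fun l => if l == l0 then
   \sum_m (if dom b0 l m then -1 else 0) * x b0 l m else 0)); last first.
  by move=> l _; case: eqP => // _; rewrite big1 // => m _; rewrite mul0r.
rewrite sum_if1.
under [X in _ + X = _]eq_bigr do rewrite mul_if.
rewrite sum_if1 /dom.
case: (l0 \in Lb D b0) => /=; last by rewrite big1 ?mul0r ?addr0 // => m _; rewrite mul0r.
rewrite mul1r addrC [in RHS]big_mkcond -sumrN; congr (_ + _).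
by apply: eq_bigr => m _; case: ifP; rewrite ?mulN1r ?oppr0 ?mul0r.
Qed.

Lemma rowGA : dot cGA = - \sum_(l in Lp D) y l.
Proof.
rewrite /A /cGA rowsum /= z3s mul0r add0r addr0 [in RHS]big_mkcond -sumrN.
by apply: eq_bigr => l _; case: ifP; rewrite ?mulN1r ?oppr0 ?mul0r.
Qed.

Lemma rowDE l0 : dot (cDE l0) = if l0 \in Lp D then
  \sum_(b : B | l0 \in Lb D b) \sum_(m in Mb D b l0) x b l0 m - y l0 else 0.
Proof.
rewrite /A /cDE rowsum /= mul0r addr0.
under eq_bigr do under eq_bigr do under eq_bigr do rewrite mul_if.
under eq_bigr do under eq_bigr do rewrite sum_if0.
under eq_bigr do rewrite sum_if1.
under [X in _ + X = _]eq_bigr do rewrite mul_if.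
rewrite sum_if1.
case: (l0 \in Lp D) => /=; last first.
  by rewrite big1 ?mul0r ?addr0 // => b _; rewrite big1 // => m _; rewrite mul0r.
rewrite mulN1r [in RHS]big_mkcond; congr (_ - _); apply: eq_bigr => b _.
rewrite /dom; case: (l0 \in Lb D b) => /=; last by rewrite big1 // => m _; rewrite mul0r.
by rewrite [in RHS]big_mkcond; apply: eq_bigr => m _; case: ifP; rewrite ?mul1r ?mul0r.
Qed.

Lemma rowMU : dot cMU = \sum_(l in Lp D :\: Lpp D) y l + p.
Proof.
rewrite /A /cMU rowsum /= z3s add0r mul1r [in RHS]big_mkcond; congr (_ + _).
by apply: eq_bigr => l _; case: ifP; rewrite ?mul1r ?mul0r.
Qed.

Lemma rowPH s : dot (cPH s) = sg s * RMP_I D x.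
Proof.
rewrite /A /cPH rowsum /= z1s mul0r !addr0 /RMP_I mulr_sumr; apply: eq_bigr => b _.
under eq_bigr do under eq_bigr do rewrite mul_if.
rewrite sum_dom mulr_sumr; apply: eq_bigr => l _; rewrite mulr_sumr.
by apply: eq_bigr => m _; rewrite mulrA.
Qed.

Lemma rowcost : \sum_i cst i * v i = RMP_obj D x p.
Proof.
rewrite /cst rowsum z1s addr0 /RMP_obj; congr (_ + _); apply: eq_bigr => b _.
under eq_bigr do under eq_bigr do rewrite mul_if.
by rewrite sum_dom.
Qed.

End Rows.


Lemma C_ind (P : C -> Prop) :
  (forall b l m, P (cNX (b, l, m))) -> (forall l, P (cNY l)) -> P cNP ->
  (forall b s, P (cAL (b, s))) -> (forall b l, P (cBE (b, l))) -> P cGA ->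
  (forall l, P (cDE l)) -> P cMU -> (forall s, P (cPH s)) -> forall c, P c.
Proof.
move=> h1 h2 h3 h4 h5 h6 h7 h8 h9.
case=> [[[[[[[[[[b l] m]|l]|[]]|[b s]]|[b l]]|[]]|l]|[]]|s].
- exact: h1. - exact: h2. - exact: h3. - exact: h4. - exact: h5.
- exact: h6. - exact: h7. - exact: h8. - exact: h9.
Qed.

Lemma feas_iff v : feas A bc v <-> RMP_feasible D (vx v) (vy v) (vp v).
Proof.
split.
- move=> h.
  have hAL : forall b, \sum_(l in Lb D b) \sum_(m in Mb D b l) vx v b l m = 1.
    move=> b; have := h (cAL (b, true)); have := h (cAL (b, false)).
    rewrite !rowAL /bc /= /sg mulN1r mul1r lerN2 => h1 h2.
    by apply/eqP; rewrite eq_le h1 h2.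
  have hPH1 := h (cPH true); have hPH2 := h (cPH false).
  rewrite !rowPH /bc /= /sg mul1r mulN1r in hPH1 hPH2.
  have hGA := h cGA; rewrite rowGA /bc /= in hGA.
  have hMU := h cMU; rewrite rowMU /bc /= in hMU.
  have hNP := h cNP; rewrite rowNP /bc /= in hNP.
  split; first by move=> b l m hl hm; have := h (cNX (b, l, m)); rewrite rowNX /dom hl hm.
  split; first by move=> l hl; have := h (cNY l); rewrite rowNY hl.
  do 2 (split => //).
  split; first by move=> b l hl; have := h (cBE (b, l)); rewrite rowBE hl.
  split => //.
  split; first by move=> l hl; have := h (cDE l); rewrite rowDE hl.
  by do 2 (split => //).
- move=> [h1 [h2 [h3 [h4 [h5 [h6 [h7 [h8 [h9 h10]]]]]]]]].
  apply: C_ind.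
  + move=> b l m; rewrite rowNX /bc /=; case: ifP => //= /andP [hl hm]; exact: h1.
  + move=> l; rewrite rowNY /bc /=; case: ifP => // hl; exact: h2.
  + by rewrite rowNP.
  + by move=> b s; rewrite rowAL h4 mulr1 /bc /=.
  + move=> b l; rewrite rowBE /bc /=; case: ifP => // hl; exact: h5.
  + by rewrite rowGA.
  + move=> l; rewrite rowDE /bc /=; case: ifP => // hl; exact: h7.
  + by rewrite rowMU.
  + by move=> [] ; rewrite rowPH /bc /= /sg ?mul1r ?mulN1r.
Qed.


Lemma sum2 (T1 T2 : finType) (F : T1 * T2 -> R) : \sum_q F q = \sum_a \sum_b F (a, b).
Proof.
symmetry; rewrite (pair_big xpredT xpredT (fun a b => F (a, b))) /=.
by apply: eq_bigr => -[a b].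
Qed.

Lemma mul_if' (P : bool) (a y : R) : y * (if P then a else 0) = if P then y * a else 0.
Proof. by case: P; rewrite ?mulr0. Qed.


Lemma sum0m (T : finType) (F : T -> R) : \sum_t F t * 0 = 0.
Proof. by rewrite big1 // => t _; rewrite mulr0. Qed.

Lemma L_a (T : finType) (t0 : T) (F : T -> R) (K : R) :
  \sum_t F t * (if t0 == t then K else 0) = F t0 * K.
Proof. under eq_bigr do rewrite mul_if'. by rewrite sum_if1'. Qed.

Lemma L_b (T U : finType) (t0 : T) (F : T -> U -> R) (G : U -> R) :
  \sum_t \sum_u F t u * (if t0 == t then G u else 0) = \sum_u F t0 u * G u.
Proof.
rewrite (eq_bigr (fun t => if t0 == t then \sum_u F t u * G u else 0)).
  by rewrite sum_if1'.
by move=> t _; case: eqP => _; rewrite ?sum0m.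
Qed.

Lemma L_c (T U : finType) (u0 : U) (F : T -> U -> R) (G : T -> R) :
  \sum_t \sum_u F t u * (if u0 == u then G t else 0) = \sum_t F t u0 * G t.
Proof. by apply: eq_bigr => t _; rewrite L_a. Qed.

Lemma sum0m2 (T U : finType) (F : T -> U -> R) : \sum_t \sum_u F t u * 0 = 0.
Proof. by rewrite big1 // => t _; rewrite sum0m. Qed.

Lemma sum0m3 (T U W : finType) (F : T -> U -> W -> R) :
  \sum_t \sum_u \sum_w F t u w * 0 = 0.
Proof. by rewrite big1 // => t _; rewrite sum0m2. Qed.

Lemma L_3 (F : B -> Lt -> Mt -> R) b l m (K : R) :
  \sum_b0 \sum_l0 \sum_m0 F b0 l0 m0 * (if (b, l, m) == (b0, l0, m0) then K else 0)
  = F b l m * K.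
Proof.
have := sum3 (fun t => F t.1.1 t.1.2 t.2 * (if (b, l, m) == t then K else 0)).
by rewrite /= => <-; rewrite L_a.
Qed.

Section Cols.
Variable lam : C -> R.

Lemma colX b l m : \sum_c lam c * A c (inl (inl (b, l, m))) =
  if dom b l m then lam (cNX (b, l, m)) + (lam (cAL (b, true)) - lam (cAL (b, false)))
     - lam (cBE (b, l)) + lam (cDE l) + coef D l m * (lam (cPH true) - lam (cPH false))
  else 0.
Proof.
rewrite !big_sumType /= !sum_unit sum3 !sum2 /= /z3 !sum0m !mulr0.
rewrite L_3 !L_b !L_a !big_bool /=.
case hd: (dom b l m); rewrite /= ?andbF; last by rewrite !mulr0 !addr0.
have -> : l \in Lp D by move: hd => /andP [h _]; exact: (subsetP (hLb b)).
rewrite /cNX /cAL /cBE /cDE /cPH /sg /=; ring.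
Qed.


Lemma colY l : \sum_c lam c * A c (inl (inr l)) =
  if l \in Lp D then lam (cNY l) + \sum_(b : B | l \in Lb D b) lam (cBE (b, l))
    - lam cGA - lam (cDE l) + chi D l * lam cMU else 0.
Proof.
rewrite !big_sumType /= !sum_unit sum3 !sum2 /= /z1 !sum0m3 !sum0m2 !sum0m !mulr0.
rewrite L_c !L_a.
have hnb : l \notin Lp D -> forall a, l \notin Lb D a.
  by move=> hl a; apply: contra hl; exact: (subsetP (hLb a)).
case hl: (l \in Lp D) => /=; last first.
  rewrite in_setD hl andbF big1 ?mulr0 ?addr0 // => a _.
  by rewrite (negbTE (hnb (negbT hl) a)) mulr0.
rewrite [in RHS]big_mkcond in_setD hl andbT /chi.
have -> : \sum_i lam (inl (inl (inl (inl (inr (i, l)))))) * (if l \in Lb D i then 1 else 0) =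
          \sum_i (if l \in Lb D i then lam (cBE (i, l)) else 0).
  by apply: eq_bigr => a _; case: ifP; rewrite ?mulr1 ?mulr0.
rewrite /cNY /cGA /cDE /cMU /cBE; case: (l \in Lpp D) => /=; ring.
Qed.

Lemma colP : \sum_c lam c * A c (inr tt) = lam cNP + lam cMU.
Proof.
rewrite !big_sumType /= !sum_unit sum3 !sum2 /= !sum0m3 !sum0m2 !sum0m !mulr0 !mulr1.
by rewrite /cNP /cMU; ring.
Qed.

Lemma colB : \sum_c lam c * bc c =
  \sum_b (lam (cAL (b, true)) - lam (cAL (b, false))) - (kk D)%:R * lam cGA
  + Ilo D * lam (cPH true) - Ihi D * lam (cPH false) + lam cMU.
Proof.
rewrite !big_sumType /= !sum_unit sum3 !sum2 /bc /= !sum0m3 !sum0m2 !sum0m !mulr0 big_bool.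
under eq_bigr do rewrite big_bool.
rewrite /cAL /cGA /cPH /cMU /sg /=.
rewrite (eq_bigr (fun i => lam (inl (inl (inl (inl (inl (inr (i, true))))))) -
      lam (inl (inl (inl (inl (inl (inr (i, false))))))))); last by move=> i _; ring.
ring.
Qed.
End Cols.



Definition mklam (fNX : B -> Lt -> Mt -> R) (fNY : Lt -> R) (fNP : R) (fAL : B -> bool -> R)
  (fBE : B -> Lt -> R) (fGA : R) (fDE : Lt -> R) (fMU : R) (fPH : bool -> R) (c : C) : R :=
  match c with
  | inl (inl (inl (inl (inl (inl (inl (inl (b, l, m)))))))) => fNX b l m
  | inl (inl (inl (inl (inl (inl (inl (inr l))))))) => fNY l
  | inl (inl (inl (inl (inl (inl (inr _)))))) => fNP
  | inl (inl (inl (inl (inl (inr (b, s)))))) => fAL b s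
  | inl (inl (inl (inl (inr (b, l))))) => fBE b l
  | inl (inl (inl (inr _))) => fGA
  | inl (inl (inr l)) => fDE l
  | inl (inr _) => fMU
  | inr s => fPH s
  end.

Lemma maxmax (a : R) : Num.max a 0 - Num.max (- a) 0 = a.
Proof.
rewrite !maxEle; case: (lerP a 0) => h1; case: (lerP (- a) 0) => h2 //=; lra.
Qed.

Lemma feas_enc x y p : RMP_feasible D x y p -> feas A bc (enc x y p).
Proof. by move=> h; apply/feas_iff. Qed.

Lemma weak_RMP x y p al be ga de mu ph ps :
  RMP_feasible D x y p -> DRMP_feasible D al be ga de mu ph ps ->
  dual_obj D al ga mu ph ps <= RMP_obj D x p.
Proof.
move=> hx [hbe [hga [hde [hmu [hph [hps [hX [hY hP]]]]]]]].
pose lam := mklam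
  (fun b l m => if dom b l m then cost D b l m - (al b - be b l + de l + coef D l m * (ph - ps)) else 0)
  (fun l => if l \in Lp D then - (\sum_(b : B | l \in Lb D b) be b l - ga - de l + chi D l * mu) else 0)
  (Pen D - mu)
  (fun b s => if s then Num.max (al b) 0 else Num.max (- al b) 0)
  (fun b l => if l \in Lb D b then be b l else 0)
  ga (fun l => if l \in Lp D then de l else 0) mu (fun s => if s then ph else ps).
have hl : forall c, 0 <= lam c.
  apply: C_ind => /=.
  - move=> b l m; case: ifP => // /andP [h1 h2]; rewrite subr_ge0; exact: hX.
  - move=> l; case: ifP => // h; rewrite oppr_ge0; exact: hY.
  - by rewrite subr_ge0.
  - by move=> b [] /=; rewrite le_max lexx orbT.
  - by move=> b l; case: ifP => // h; exact: hbe.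
  - by [].
  - by move=> l; case: ifP => // h; exact: hde.
  - by [].
  - by case.
have hc : forall i, \sum_c lam c * A c i = cst i.
  case=> [[[[b l] m]|l]|[]].
  - rewrite colX /cst /=; case hd: (dom b l m) => //=.
    move: (hd) => /andP [h1 _].
    rewrite /cNX /cAL /cBE /cDE /cPH /= h1 (subsetP (hLb b) _ h1).
    have := maxmax (al b); lra.
  - rewrite colY /cst /= /z1; case: ifP => // hlp.
    rewrite /cNY /cBE /cGA /cDE /cMU /= hlp.
    have -> : \sum_(b | l \in Lb D b) (if l \in Lb D b then be b l else 0) =
              \sum_(b | l \in Lb D b) be b l by apply: eq_bigr => b ->.
    ring.
  - by rewrite colP /cst /= /cNP /cMU /=; ring.
have := wd_lp hl hc (feas_enc hx).
rewrite colB rowcost /=.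
have -> : \sum_b (Num.max (al b) 0 - Num.max (- al b) 0) = \sum_b al b.
  by apply: eq_bigr => b _; rewrite maxmax.
by rewrite /dual_obj.
Qed.

Lemma strong x y p al be ga de mu ph ps :
  RMP_optimal D x y p -> DRMP_optimal D al be ga de mu ph ps ->
  dual_obj D al ga mu ph ps = RMP_obj D x p.
Proof.
move=> [hx hxo] [hd hdo]; apply/eqP; rewrite eq_le (weak_RMP hx hd) /=.
rewrite leNgt; apply/negP => hlt.
pose z := RMP_obj D x p.
have hfe : exists v, feas A bc v by exists (enc x y p); exact: feas_enc.
have hz : forall v, feas A bc v -> z <= \sum_i cst i * v i.
  by move=> v /feas_iff hv; rewrite rowcost; exact: (hxo _ _ _ hv).
have heps : 0 < z - dual_obj D al ga mu ph ps by rewrite subr_gt0.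
have [lam [hl [hc hb]]] := lp_dual hfe hz heps.
pose al' b := lam (cAL (b, true)) - lam (cAL (b, false)).
have hdf : DRMP_feasible D al' (fun b l => lam (cBE (b, l))) (lam cGA) (fun l => lam (cDE l))
   (lam cMU) (lam (cPH true)) (lam (cPH false)).
  split; first by move=> *; exact: hl.
  split; first exact: hl.
  split; first by move=> *; exact: hl.
  do 3 (split; first exact: hl).
  split.
    move=> b l m h1 h2; have := hc (inl (inl (b, l, m))).
    rewrite colX /cst /= /dom h1 h2 /= => h.
    have := hl (cNX (b, l, m)); rewrite /al'; lra.
  split.
    move=> l hl'; have := hc (inl (inr l)); rewrite colY /cst /= /z1 hl' => h.
    have := hl (cNY l); lra.
  have := hc (inr tt); rewrite colP /cst /= => h; have := hl cNP; lra.
have := hdo _ _ _ _ _ _ _ hdf.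
have -> : dual_obj D al' (lam cGA) (lam cMU) (lam (cPH true)) (lam (cPH false)) =
   \sum_c lam c * bc c by rewrite colB.
move=> h; move: hb; rewrite -/z; lra.
Qed.

Lemma s3D (F G : B -> Lt -> Mt -> R) :
  \sum_b \sum_l \sum_m (F b l m + G b l m) =
  \sum_b \sum_l \sum_m F b l m + \sum_b \sum_l \sum_m G b l m.
Proof.
rewrite -big_split; apply: eq_bigr => b _; rewrite -big_split; apply: eq_bigr => l _.
by rewrite big_split.
Qed.

Lemma weak_MP x y p al be ga de mu ph ps :
  MP_feasible D x y p -> DMP_feasible D al be ga de mu ph ps ->
  dual_obj D al ga mu ph ps <= MP_obj D x p.
Proof.
move=> [hx [hy [hp [h1 [h2 [h3 [h4 [h5 [h6 h7]]]]]]]]]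
       [hbb [hg [hd [hmu [hph [hps [hX [hY hP]]]]]]]].
have hA : \sum_b \sum_l \sum_m ((al b * x b l m + (de l - be b l) * x b l m)
     + (ph - ps) * (coef D l m * x b l m)) <= \sum_b \sum_l \sum_m cost D b l m * x b l m.
  apply: ler_sum => b _; apply: ler_sum => l _; apply: ler_sum => m _.
  have := ler_wpM2r (hx b l m) (hX b l m); apply: le_trans.
  rewrite le_eqVlt; apply/orP; left; apply/eqP; ring.
rewrite !s3D in hA.
have e1 : \sum_b \sum_l \sum_m al b * x b l m = \sum_b al b.
  apply: eq_bigr => b _; rewrite -[RHS]mulr1 -(h1 b) mulr_sumr; apply: eq_bigr => l _.
  by rewrite mulr_sumr.
have e3 : \sum_b \sum_l \sum_m (ph - ps) * (coef D l m * x b l m) = (ph - ps) * MP_I D x.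
  rewrite /MP_I mulr_sumr; apply: eq_bigr => b _; rewrite mulr_sumr; apply: eq_bigr => l _.
  by rewrite mulr_sumr.
have e2 : \sum_b \sum_l \sum_m (de l - be b l) * x b l m =
          \sum_l (de l * \sum_b \sum_m x b l m - \sum_b be b l * \sum_m x b l m).
  rewrite exchange_big /=; apply: eq_bigr => l _.
  rewrite mulr_sumr -sumrN -big_split /=; apply: eq_bigr => b _.
  rewrite !mulr_sumr -sumrN -big_split /=; apply: eq_bigr => m _; ring.
have hYl : forall l, (chi D l * mu - ga) * y l <=
     de l * \sum_b \sum_m x b l m - \sum_b be b l * \sum_m x b l m.
  move=> l.
  have hb : \sum_b be b l * \sum_m x b l m <= (\sum_b be b l) * y l.
    rewrite mulr_suml; apply: ler_sum => b _; apply: ler_wpM2l => //.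
    by have := h2 b l; rewrite subr_ge0.
  have hxs : y l <= \sum_b \sum_m x b l m by have := h4 l; rewrite subr_ge0.
  have := hY l; have := hy l; have := hd l; nra.
have hS : \sum_l (chi D l * mu - ga) * y l =
          mu * \sum_(l | l \notin Lpp D) y l - ga * \sum_l y l.
  rewrite !mulr_sumr [in RHS]big_mkcond -sumrN -big_split /=; apply: eq_bigr => l _.
  by rewrite /chi; case: ifP => /= _; ring.
have hYs : \sum_l (chi D l * mu - ga) * y l <=
   \sum_l (de l * \sum_b \sum_m x b l m - \sum_b be b l * \sum_m x b l m).
  by apply: ler_sum => l _; exact: hYl.
rewrite hS -e2 in hYs.
rewrite e1 e3 in hA.
rewrite /dual_obj /MP_obj.
move: hA hYs h3 h5 h6 h7.
set Q := \sum_(l | l \notin Lpp D) y l.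
set Yk := \sum_l y l.
set I := MP_I D x.
set E := \sum_b \sum_l \sum_m (de l - be b l) * x b l m.
move=> hA hYs h3 h5 h6 h7.
have k1 : 0 <= mu * (Q + p - 1) by apply: mulr_ge0 => //; lra.
have k2 : 0 <= ga * ((kk D)%:R - Yk) by apply: mulr_ge0 => //; lra.
have k3 : 0 <= ph * (I - Ilo D) by apply: mulr_ge0 => //; lra.
have k4 : 0 <= ps * (Ihi D - I) by apply: mulr_ge0 => //; lra.
have k5 : 0 <= (Pen D - mu) * p by apply: mulr_ge0 => //; lra.
nra.
Qed.

Lemma fmin_cons (v : R) (s : seq R) : fmin (v :: s) = Some (if fmin s is Some w then Num.min v w else v).
Proof. by []. Qed.

Lemma fminS (s : seq R) : match fmin s with
  | Some w => w \in s /\ (forall v, v \in s -> w <= v) | None => s = [::] end.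
Proof.
elim: s => [//|v s IH]; rewrite fmin_cons.
case: (fmin s) IH => [w [hw hm]|->].
  rewrite minEle; case: (lerP v w) => h; split.
  - by rewrite in_cons eqxx.
  - move=> u; rewrite in_cons => /orP [/eqP -> //|/hm]; exact: le_trans.
  - by rewrite in_cons hw orbT.
  - move=> u; rewrite in_cons => /orP [/eqP -> |/hm //]; exact: ltW.
split; first by rewrite in_cons eqxx.
by move=> u; rewrite in_cons => /orP [/eqP -> //|].
Qed.

Lemma negpart_ge0 (o : option R) : 0 <= negpartE o.
Proof. by case: o => [w|] //=; rewrite le_max lexx orbT. Qed.

Lemma pospart_ge0 (o : option R) : 0 <= pospartE o.
Proof. by case: o => [w|] //=; rewrite le_max lexx orbT. Qed.

Lemma negpart_le (s : seq R) v : v \in s -> - negpartE (fmin s) <= v.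
Proof.
move=> hv; have := fminS s; case: (fmin s) => [w [_ hm]|hs]; last by rewrite hs in hv.
have := hm v hv; rewrite /= maxEle; case: (lerP (- w) 0) => h; lra.
Qed.

Lemma posneg_le (s1 s2 : seq R) t : (forall v, v \in s1 -> v \in s2) -> t \in s1 ->
  pospartE (fmin s2) - negpartE (fmin s1) <= t.
Proof.
move=> hsub ht.
have := fminS s1; case: (fmin s1) => [u [hu hm1]|hs]; last by rewrite hs in ht.
have := fminS s2; case: (fmin s2) => [w [hw hm2]|hs]; last by have := hsub _ ht; rewrite hs.
have h1 := hm1 _ ht; have h2 := hm2 _ (hsub _ hu).
rewrite /= !maxEle; case: (lerP w 0) => ?; case: (lerP (- u) 0) => ?; lra.
Qed.
End App.

Unset Implicit Arguments.

Theorem theorem2 (R : realFieldType) (B S Mt Lt : finType)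
  (D : data R B S Mt Lt)
  (hB : (0 < #|B|)%N) (hS : (0 < #|S|)%N) (hM : (0 < #|Mt|)%N) (hL : (0 < #|Lt|)%N)
  (hmval : injective (mval D)) (hlot : injective (lot D))
  (hcost : forall b l m, 0 <= cost D b l m)
  (hI : Ilo D <= Ihi D) (hP : 0 < Pen D)
  (hLpp : Lpp D \subset Lp D) (hLb : forall b, Lb D b \subset Lp D)
  (hMb : forall b l, l \in Lb D b -> Mb D b l != set0)
  (x : B -> Lt -> Mt -> R) (y : Lt -> R) (p : R)
  (al : B -> R) (be : B -> Lt -> R) (ga : R) (de : Lt -> R) (mu ph ps : R)
  (hopt : RMP_optimal D x y p)
  (hdopt : DRMP_optimal D al be ga de mu ph ps) :
  let zRMP := RMP_obj D x p in
  let cs := cstar D al be de ph ps in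
  let ds := dstar D al be ga de mu ph ps in
  let bt := checkbeta D al be de ph ps in
  let dt := checkdelta D al be de ph ps in
  let at_ := alpha_t D al be de ph ps in
  let gt := gamma_t D al be ga de mu ph ps in
  DMP_feasible D at_ bt gt dt mu ph ps /\
  dual_obj D at_ gt mu ph ps = zRMP + \sum_(b : B) cs b + (kk D)%:R * ds /\
  (forall x' y' p', MP_feasible D x' y' p' ->
     zRMP + \sum_(b : B) cs b + (kk D)%:R * ds <= MP_obj D x' p').
Proof.
cbv zeta.
have hstr := strong hLb hopt hdopt.
have [hd _] := hdopt.
move: (hd) => [hbe [hga [hde [hmu [hph [hps [hX [hY hPm]]]]]]]].
set cb := cbar D al be de ph ps.
have cs_le0 : forall b, cstar D al be de ph ps b <= 0.
  by move=> b; rewrite /cstar oppr_le0 negpart_ge0.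
have cs_le : forall b l m, l \in Lb D b -> cstar D al be de ph ps b <= cb b l m.
  move=> b l m hl; rewrite /cstar; apply: negpart_le.
  by apply: allpairs_f; rewrite ?mem_enum ?mem_index_enum.
have ds_le0 : dstar D al be ga de mu ph ps <= 0.
  by rewrite /dstar oppr_le0 negpart_ge0.
have ds_le : forall l : Lt, l \in ~: (\bigcap_(b : B) Lb D b) ->
    dstar D al be ga de mu ph ps <= dval D al be ga de mu ph ps l.
  move=> l hl; rewrite /dstar; apply: negpart_le.
  by apply: map_f; rewrite mem_enum.
have part1 : DMP_feasible D (alpha_t D al be de ph ps) (checkbeta D al be de ph ps)
    (gamma_t D al be ga de mu ph ps) (checkdelta D al be de ph ps) mu ph ps.
  split.
    move=> b l; rewrite /checkbeta; case: ifP => h; [exact: hbe | exact: negpart_ge0].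
  split; first by rewrite /gamma_t; lra.
  split.
    move=> l; rewrite /checkdelta; case: ifP => h; [exact: hde | exact: pospart_ge0].
  do 3 (split => //).
  split.
    move=> b l m; rewrite /alpha_t /checkbeta /checkdelta.
    have := cs_le0 b.
    case hl: (l \in Lb D b).
      have hl' : l \in Lp D by exact: (subsetP (hLb b)).
      rewrite hl'; have := cs_le b l m hl.
      rewrite /cb /cbar /betabar /deltabar hl hl'; lra.
    case hl': (l \in Lp D).
      have := @negpart_le _ [seq cbar D al be de ph ps b l m | m <- index_enum Mt]
        (cb b l m) (map_f _ (mem_index_enum m)).
      rewrite /cb /cbar /betabar /deltabar hl hl'; lra.
    have := @posneg_le _ [seq cbar D al be de ph ps b l m | m <- index_enum Mt]
        [seq cbar D al be de ph ps b l m | b <- index_enum B, m <- index_enum Mt]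
        (cb b l m)
        ltac:(move=> v /mapP [m' hm' ->]; apply: allpairs_f; rewrite ?mem_index_enum)
        (map_f _ (mem_index_enum m)).
    rewrite /cb /cbar /betabar /deltabar hl hl'; lra.
  split => //.
  move=> l; rewrite /gamma_t.
  case hl: (l \in ~: (\bigcap_(b : B) Lb D b)).
    have := ds_le l hl; rewrite /dval; lra.
  move: hl; rewrite in_setC => /negbFE /bigcapP hall.
  have [b0 _] : exists b0, b0 \in B by apply/card_gt0P.
  have hlp : l \in Lp D by apply: (subsetP (hLb b0)); apply: hall.
  have := hY l hlp.
  have -> : \sum_(b | l \in Lb D b) be b l = \sum_b checkbeta D al be de ph ps b l.
    rewrite big_mkcond; apply: eq_bigr => b _; rewrite /checkbeta hall //.
  rewrite /checkdelta hlp; lra.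
have part2 : dual_obj D (alpha_t D al be de ph ps) (gamma_t D al be ga de mu ph ps) mu ph ps =
    RMP_obj D x p + \sum_b cstar D al be de ph ps b + (kk D)%:R * dstar D al be ga de mu ph ps.
  rewrite -hstr /dual_obj /alpha_t /gamma_t big_split /=; ring.
split => //; split => // x' y' p' hf.
by rewrite -part2; exact: weak_MP hf part1.
Qed.
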